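(* Let $H\in\mathbb{R}^{n\times n}$ and $M\in\mathbb{R}^{m\times m}$ be symmetric positive semidefinite and $A\in\mathbb{R}^{m\times n}$. Let $l$ be an index and $\mathcal{B},\mathcal{N}$ index sets such that $\mathcal{B}$, $\{l\}$, $\mathcal{N}$ are pairwise disjoint with union $\{1,\dots,n\}$. Consider vectors $(\Delta x,\Delta y,\Delta z)\in\mathbb{R}^n\times\mathbb{R}^m\times\mathbb{R}^n$ satisfying \[ H\Delta x-A^T\Delta y-\Delta z=0,\quad A\Delta x+M\Delta y=0,\quad \Delta x_{\mathcal{N}}=0,\quad \Delta z_{\mathcal{B}}=0. \tag{$*$} \] Assume $K_{\mathcal{B}}$ is nonsingular and let $\Delta x_l$ be a given nonnegative scalar. 1. If $\Delta x_l=0$, then the only solution of $( * )$ with this value of $\Delta x_l$ is zero, i.e., $\Delta x_{\mathcal{B}}=0$, $\Delta y=0$, $\Delta z_l=0$, $\Delta z_{\mathcal{N}}=0$. 2. If $\Delta x_l>0$, then the quantities $\Delta x_{\mathcal{B}},\Delta y,\Delta z_l,\Delta z_{\mathcal{N}}$ of a solution of $( * )$ with this value of $\Delta x_l$ are unique and satisfy \[ K_{\mathcal{B}}\begin{pmatrix}\Delta x_{\mathcal{B}}\\ -\Delta y\end{pmatrix}=-\begin{pmatrix}h_{\mathcal{B}l}\\ a_l\end{pmatrix}\Delta x_l,\quad \Delta z_l=h_{ll}\Delta x_l+h_{\mathcal{B}l}^T\Delta x_{\mathcal{B}}-a_l^T\Delta y,\quad \Delta z_{\mathcal{N}}=h_{\mathcal{N}l}\Delta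 x_l+H_{\mathcal{B}\mathcal{N}}^T\Delta x_{\mathcal{B}}-A_{\mathcal{N}}^T\Delta y. \] Moreover, either (i) $K_l$ is nonsingular and $\Delta z_l>0$, or (ii) $K_l$ is singular and $\Delta z_l=0$, in which case $\Delta y=0$, $\Delta z_{\mathcal{N}}=0$, and the zero eigenvalue of $K_l$ has multiplicity one with corresponding eigenvector $(\Delta x_l,\Delta x_{\mathcal{B}},0)$.
   Context: For index sets $S,T$: $w_S$ is the subvector of $w$ indexed by $S$; $H_{ST}$ is the submatrix of $H$ with rows in $S$ and columns in $T$; $A_S$ is the matrix of columns of $A$ indexed by $S$; $a_l$ is the $l$th column of $A$; $h_{ll}$ is the $l$th diagonal entry of $H$; $h_{Sl}$ is the column vector of entries $h_{il}$, $i\in S$. Define \[ K_{\mathcal{B}}=\begin{pmatrix}H_{\mathcal{B}\mathcal{B}}&A_{\mathcal{B}}^T\\ A_{\mathcal{B}}&-M\end{pmatrix},\qquad K_l=\begin{pmatrix}h_{ll}&h_{\mathcal{B}l}^T&a_l^T\\ h_{\mathcal{B}l}&H_{\mathcal{B}\mathcal{B}}&A_{\mathcal{B}}^T\\ a_l&A_{\mathcal{B}}&-M\end{pmatrix}. \] *)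

(* Defs.v *)
From HB Require Import structures.
From mathcomp Require Import all_boot all_order all_algebra.
Set Implicit Arguments. Unset Strict Implicit. Unset Printing Implicit Defensive.
Import Order.TTheory GRing.Theory Num.Theory.
Local Open Scope ring_scope.

Section Defs.
Variable R : realFieldType.

(* The k-th element (in increasing order) of an index set S of {0..n-1}. *)
Definition sidx n (S : {set 'I_n}) (k : 'I_#|S|) : 'I_n := enum_val k.

Definition sym_psd n (H : 'M[R]_n) : Prop :=
  H^T = H /\ forall x : 'cV[R]_n, 0 <= (x^T *m H *m x) 0 0.

Definition subv n (S : {set 'I_n}) (w : 'cV[R]_n) : 'cV[R]_#|S| :=
  \col_k w (sidx k) 0.
Definition subm n (S T : {set 'I_n}) (H : 'M[R]_n) : 'M[R]_(#|S|, #|T|) :=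
  \matrix_(i, j) H (sidx i) (sidx j).
Definition subcol n (S : {set 'I_n}) (H : 'M[R]_n) (l : 'I_n) : 'cV[R]_#|S| :=
  \col_k H (sidx k) l.
Definition colsubm m n (A : 'M[R]_(m, n)) (S : {set 'I_n}) : 'M[R]_(m, #|S|) :=
  \matrix_(i, j) A i (sidx j).

Definition KB m n (H : 'M[R]_n) (M : 'M[R]_m) (A : 'M[R]_(m, n))
    (B : {set 'I_n}) : 'M[R]_(#|B| + m) :=
  block_mx (subm B B H) (colsubm A B)^T (colsubm A B) (- M).

(* K_l, in block form with index order (l, B, rows of A) *)
Definition Kl m n (H : 'M[R]_n) (M : 'M[R]_m) (A : 'M[R]_(m, n))
    (B : {set 'I_n}) (l : 'I_n) : 'M[R]_(1 + (#|B| + m)) :=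
  block_mx (H l l)%:M (row_mx (subcol B H l)^T (col l A)^T)
           (col_mx (subcol B H l) (col l A)) (KB H M A B).

Definition sys m n (H : 'M[R]_n) (M : 'M[R]_m) (A : 'M[R]_(m, n))
    (B N : {set 'I_n}) (dx : 'cV[R]_n) (dy : 'cV[R]_m) (dz : 'cV[R]_n) : Prop :=
  [/\ H *m dx - A^T *m dy - dz = 0,
      A *m dx + M *m dy = 0,
      subv N dx = 0 &
      subv B dz = 0].

End Defs.

(* Main.v *)
Require Import Defs.
From HB Require Import structures.
From mathcomp Require Import all_boot all_order all_algebra.
From mathcomp Require Import ring lra.
Import Order.TTheory GRing.Theory Num.Theory.
Local Open Scope ring_scope.
Set Implicit Arguments. Unset Strict Implicit. Unset Printing Implicit Defensive.

Lemma eD (R : realFieldType) p q (X Y : 'M[R]_(p,q)) i j : (X + Y) i j = X i j + Y i j.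
Proof. by rewrite mxE. Qed.
Lemma eN (R : realFieldType) p q (X : 'M[R]_(p,q)) i j : (- X) i j = - X i j.
Proof. by rewrite mxE. Qed.
Lemma eZ (R : realFieldType) p q a (X : 'M[R]_(p,q)) i j : (a *: X) i j = a * X i j.
Proof. by rewrite mxE. Qed.
Lemma mulmx_row_eq (R : realFieldType) p q r (X : 'M[R]_(p,q)) (Y : 'M[R]_(r,q)) (y : 'cV[R]_q) k i :
  (forall j, X k j = Y i j) -> (X *m y) k 0 = (Y *m y) i 0.
Proof. by move=> h; rewrite !mxE; apply: eq_bigr => j _; rewrite h. Qed.

Lemma psd0 (R : realFieldType) p (X : 'M[R]_p) (x : 'cV[R]_p) :
  sym_psd X -> (x^T *m X *m x) 0 0 = 0 -> X *m x = 0.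
Proof.
case=> XS Xp q0.
set w := X *m x.
have xX : x^T *m X = w^T by rewrite /w trmx_mul XS.
have wx : (w^T *m x) 0 0 = 0 by rewrite -xX.
set a : R := (w^T *m w) 0 0; set b : R := (w^T *m X *m w) 0 0.
have b0 : 0 <= b by exact: Xp.
have E t : ((x + t *: w)^T *m X *m (x + t *: w)) 0 0 = 2 * t * a + t ^+ 2 * b.
  rewrite linearD linearZ /= [(x + t *: w)^T]linearD /= !linearZ /= !mulmxDl -!scalemxAl xX !(eD, eZ) wx -/a -/b -mulmxA -/w -/a; ring.
have a0 : a = 0.
  set t := - a / (b + 1).
  have b1 : 0 < b + 1 by lra.
  have ht : t * (b + 1) = - a by rewrite /t divfK // gt_eqF.
  have := Xp (x + t *: w); rewrite E => f0.
  have a_ge : 0 <= a.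
    rewrite /a mxE; apply: sumr_ge0 => i _; rewrite mxE -expr2; exact: sqr_ge0.
  nra.
apply/matrixP => i j; rewrite (ord1 j) [RHS]mxE.
have hnn : forall k : 'I_p, true -> 0 <= w^T 0 k * w k 0.
  by move=> k _; rewrite mxE -expr2 sqr_ge0.
have := a0; rewrite /a mxE => /(psumr_eq0P hnn) /(_ i isT).
by rewrite mxE -expr2 => /eqP; rewrite sqrf_eq0 => /eqP.
Qed.

Section P.
Variable R : realFieldType.
Variables (n m : nat) (H : 'M[R]_n) (M : 'M[R]_m) (A : 'M[R]_(m, n)) (l : 'I_n) (B N : {set 'I_n}).
Hypotheses (lB : l \notin B) (lN : l \notin N) (dBN : [disjoint B & N])
  (cov : B :|: [set l] :|: N = setT).

Lemma subv0P (w : 'cV[R]_n) S : subv S w = 0 -> forall i, i \in S -> w i 0 = 0.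
Proof.
move=> /matrixP h i iS; have := h (enum_rank_in iS i) 0.
by rewrite !mxE /sidx enum_rankK_in.
Qed.

Lemma sum_split (F : 'I_n -> R) : (forall i, i \in N -> F i = 0) ->
  \sum_j F j = F l + \sum_(k < #|B|) F (sidx k).
Proof.
move=> F0.
have -> : \sum_(k < #|B|) F (sidx k) = \sum_(j in B) F j.
  by rewrite [RHS]big_enum_val /sidx.
rewrite (bigID (fun j => j \in N)) /= big1 ?add0r; last by move=> i /F0.
rewrite (bigD1 l) //=; congr (_ + _); apply: eq_bigl => j.
case jB: (j \in B).
  rewrite (disjointFr dBN jB) /=; apply/eqP => e; move: lB; by rewrite -e jB.
have : j \in B :|: [set l] :|: N by rewrite cov inE.
by rewrite !inE jB /= => /orP[->|->]; rewrite ?andbF.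
Qed.

Lemma mul_split p (G : 'M[R]_(p, n)) (w : 'cV[R]_n) : subv N w = 0 ->
  G *m w = w l 0 *: col l G + colsubm G B *m subv B w.
Proof.
move=> wN; apply/matrixP=> i j; rewrite (ord1 j) !mxE (sum_split (F := fun j => G i j * w j 0)).
  congr (_ + _); first by rewrite mulrC.
  by apply: eq_bigr => k _; rewrite !mxE.
by move=> k kN; rewrite (subv0P wN kN) mulr0.
Qed.


Hypotheses (HS : H^T = H) (MS : M^T = M).

Lemma sysE dx dy dz : sys H M A B N dx dy dz ->
  [/\ dz = H *m dx - A^T *m dy, A *m dx = - (M *m dy), subv N dx = 0 & subv B dz = 0].
Proof.
case=> e1 e2 e3 e4; split=> //; first by rewrite (subr0_eq e1).
by apply/eqP; rewrite -addr_eq0; apply/eqP.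
Qed.

Lemma KBeq dx dy dz : sys H M A B N dx dy dz ->
  KB H M A B *m col_mx (subv B dx) (- dy) = - (dx l 0 *: col_mx (subcol B H l) (col l A)).
Proof.
move=> /sysE [ez e2 xN zB].
rewrite /KB mul_block_col scale_col_mx opp_col_mx; congr col_mx.
  apply/matrixP => k j; rewrite (ord1 j).
  have := subv0P zB (enum_valP k); rewrite ez (mul_split H xN) !(eD, eN, eZ).
  have -> : (subm B B H *m subv B dx) k 0 = (colsubm H B *m subv B dx) (sidx k) 0.
    by apply: mulmx_row_eq => j'; rewrite !mxE.
  have -> : ((colsubm A B)^T *m - dy) k 0 = - (A^T *m dy) (sidx k) 0.
    by rewrite mulmxN eN; congr (- _); apply: mulmx_row_eq => j'; rewrite !mxE.
  rewrite !mxE /sidx; lra.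
rewrite mulNmx mulmxN opprK; apply/eqP; rewrite -addr_eq0.
have h := mul_split A xN; rewrite e2 in h.
by rewrite addrAC (addrC (colsubm A B *m _)) -h addNr.
Qed.

Hypothesis KBu : KB H M A B \in unitmx.

Lemma hs i j : H i j = H j i.
Proof. by rewrite -{1}HS mxE. Qed.

Lemma dxE (dx : 'cV[R]_n) : subv N dx = 0 -> dx = dx l 0 *: col l (1%:M : 'M[R]_n) + colsubm (1%:M : 'M[R]_n) B *m subv B dx.
Proof. by move=> xN; rewrite -{1}[dx]mul1mx (mul_split _ xN). Qed.

Lemma uniq_gen dx dy dz dx' dy' dz' :
  sys H M A B N dx dy dz -> sys H M A B N dx' dy' dz' -> dx' l 0 = dx l 0 ->
  [/\ dx' = dx, dy' = dy & dz' = dz].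
Proof.
move=> S S' e.
have k1 := KBeq S; have k2 := KBeq S'.
rewrite e -k1 in k2.
have := congr1 (mulmx (invmx (KB H M A B))) k2; rewrite !mulKmx // => /eq_col_mx [e1 /oppr_inj e2].
move: S S' => /sysE [ez _ xN _] /sysE [ez' _ xN' _].
have ex : dx' = dx by rewrite (dxE xN) (dxE xN') e e1.
by split=> //; rewrite ez ez' ex e2.
Qed.

Lemma zl_formula dx dy dz : sys H M A B N dx dy dz ->
  dz l 0 = H l l * dx l 0 + ((subcol B H l)^T *m subv B dx) 0 0
                  - ((col l A)^T *m dy) 0 0.
Proof.
move=> /sysE [ez _ xN _].
rewrite ez (mul_split H xN) !(eD, eN, eZ).
have -> : ((subcol B H l)^T *m subv B dx) 0 0 = (colsubm H B *m subv B dx) l 0.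
  by apply: mulmx_row_eq => j; rewrite !mxE hs.
have -> : ((col l A)^T *m dy) 0 0 = (A^T *m dy) l 0.
  by apply: mulmx_row_eq => j; rewrite !mxE.
rewrite !mxE; lra.
Qed.

Lemma zN_formula dx dy dz : sys H M A B N dx dy dz ->
  subv N dz = dx l 0 *: subcol N H l + (subm B N H)^T *m subv B dx
                     - (colsubm A N)^T *m dy.
Proof.
move=> /sysE [ez _ xN _].
apply/matrixP => k j; rewrite (ord1 j) !(eD, eN, eZ).
have -> : ((subm B N H)^T *m subv B dx) k 0 = (colsubm H B *m subv B dx) (sidx k) 0.
  by apply: mulmx_row_eq => j'; rewrite !mxE hs.
have -> : ((colsubm A N)^T *m dy) k 0 = (A^T *m dy) (sidx k) 0.
  by apply: mulmx_row_eq => j'; rewrite !mxE.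
rewrite [subv N dz k 0]mxE ez (mul_split H xN) !(eD, eN, eZ) !mxE; lra.
Qed.


Lemma sys0 : sys H M A B N 0 0 0.
Proof.
by split; rewrite ?mulmx0 ?subr0 ?addr0 //; apply/matrixP => i j; rewrite !mxE.
Qed.

Lemma xz dx dy dz : sys H M A B N dx dy dz ->
  dx l 0 * dz l 0 = (dx^T *m H *m dx) 0 0 + (dy^T *m M *m dy) 0 0.
Proof.
move=> /sysE [ez e2 xN zB].
have e1 : (dx^T *m dz) 0 0 = dx l 0 * dz l 0.
  rewrite mxE (sum_split (F := fun j => dx^T 0 j * dz j 0)); last first.
    by move=> i iN; rewrite mxE (subv0P xN iN) mul0r.
  rewrite big1 ?addr0 ?mxE // => k _.
  by rewrite /sidx (subv0P zB (enum_valP k)) mulr0.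
rewrite -e1 ez mulmxBr !mulmxA -trmx_mul e2 linearN /= mulNmx trmx_mul MS opprK eD.
by [].
Qed.


Lemma eS p (a : R) (i : 'I_p) : (a%:M : 'M[R]_p) i i = a.
Proof. by rewrite mxE eqxx mulr1n. Qed.

Definition cc := col_mx (subcol B H l) (col l A).
Definition Pm (x : R) (u : 'cV[R]_(#|B| + m)) : 'M[R]_(1 + (#|B| + m)) :=
  block_mx x%:M 0 u 1%:M.

Lemma KlP dx dy dz : sys H M A B N dx dy dz ->
  Kl H M A B l *m Pm (dx l 0) (col_mx (subv B dx) (- dy))
  = block_mx (dz l 0)%:M cc^T 0 (KB H M A B).
Proof.
move=> S; rewrite /Kl /Pm mulmx_block -tr_col_mx -/cc (KBeq S).
rewrite !mulmx0 !add0r !mulmx1 [cc *m _]mul_mx_scalar /cc addrN; congr block_mx.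
apply/matrixP => i j; rewrite (ord1 i) (ord1 j) eD -scalar_mxM eS (zl_formula S).
by rewrite tr_col_mx mul_row_col eD mulmxN eN addrA eS.
Qed.

Lemma detP x u : \det (Pm x u) = x.
Proof. by rewrite /Pm det_lblock det_scalar1 det1 mulr1. Qed.

Lemma det_rel dx dy dz : sys H M A B N dx dy dz ->
  \det (Kl H M A B l) * dx l 0 = dz l 0 * \det (KB H M A B).
Proof.
move=> S; have := congr1 determinant (KlP S).
by rewrite det_mulmx detP det_ublock det_scalar1.
Qed.

Lemma KBsym : (KB H M A B)^T = KB H M A B.
Proof.
rewrite /KB tr_block_mx trmxK linearN /= MS; congr block_mx.
by apply/matrixP => i j; rewrite !mxE hs.
Qed.


Hypotheses (HP : sym_psd H) (MP : sym_psd M).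

Lemma sing_case dx dy dz : sys H M A B N dx dy dz -> dz l 0 = 0 ->
  [/\ H *m dx = 0, dy = 0 & dz = 0].
Proof.
move=> S zl0; have := xz S; rewrite zl0 mulr0 => e.
have qH : 0 <= (dx^T *m H *m dx) 0 0 := HP.2 dx.
have qM : 0 <= (dy^T *m M *m dy) 0 0 := MP.2 dy.
have hH : (dx^T *m H *m dx) 0 0 = 0 by lra.
have hM : (dy^T *m M *m dy) 0 0 = 0 by lra.
have Hx := psd0 HP hH; have My := psd0 MP hM.
move: S => /sysE [ez e2 xN zB]; rewrite Hx sub0r in ez.
have AtB : (colsubm A B)^T *m dy = 0.
  apply/matrixP => k j; rewrite (ord1 j).
  have -> : ((colsubm A B)^T *m dy) k 0 = (A^T *m dy) (sidx k) 0.
    by apply: mulmx_row_eq => j'; rewrite !mxE.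
  have := subv0P zB (enum_valP k); rewrite ez eN /sidx => /eqP; rewrite oppr_eq0 => /eqP ->.
  by rewrite mxE.
have K0 : KB H M A B *m col_mx 0 (- dy) = 0.
  by rewrite /KB mul_block_col !mulmx0 !add0r mulmxN AtB oppr0 mulNmx mulmxN opprK My col_mx0.
have : col_mx 0 (- dy) = col_mx (0 : 'cV[R]_#|B|) 0.
  by rewrite col_mx0 -(mulKmx KBu (col_mx 0 (- dy))) K0 mulmx0.
move/eq_col_mx => [_ /eqP]; rewrite oppr_eq0 => /eqP y0.
by split=> //; rewrite ez y0 mulmx0 oppr0.
Qed.


Lemma scal0 p : ((0 : R)%:M : 'M[R]_p) = 0.
Proof. by apply/matrixP => i j; rewrite !mxE mul0rn. Qed.

Lemma uuT_unit (u : 'cV[R]_(#|B| + m)) (s : R) : 0 < s ->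
  1%:M + s *: (u *m u^T) \in unitmx.
Proof.
move=> s0.
set q : R := (u^T *m u) 0 0.
have q0 : 0 <= q by rewrite /q mxE; apply: sumr_ge0 => i _; rewrite mxE -expr2 sqr_ge0.
have XX : (u *m u^T) *m (u *m u^T) = q *: (u *m u^T).
  by rewrite mulmxA -(mulmxA u) (mx11_scalar (u^T *m u)) -/q mul_mx_scalar -scalemxAl.
set t : R := s / (1 + s * q).
have hc : s - t - s * t * q = 0.
  have sq : 0 < 1 + s * q by have := mulr_ge0 (ltW s0) q0; lra.
  rewrite /t; field; by rewrite gt_eqF.
have E : (1%:M + s *: (u *m u^T)) *m (1%:M - t *: (u *m u^T)) = 1%:M.
  rewrite mulmxDl mul1mx mulmxBr mulmx1 -scalemxAl -scalemxAr XX scalerA.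
  apply/matrixP => i j; rewrite !(eD, eN, eZ).
  rewrite -[RHS]addr0 -(mulr0 ((u *m u^T) i j)) -hc; ring.
by case: (mulmx1_unit E).
Qed.


Lemma mup_case dx dy dz : sys H M A B N dx dy dz -> 0 < dx l 0 -> dz l 0 = 0 ->
  mup 0 (char_poly (Kl H M A B l)) = 1%N.
Proof.
move=> S xl0 zl0.
have [Hx y0 z0] := sing_case S zl0.
have KP := KlP S; rewrite zl0 scal0 in KP.
have hc := KBeq S.
set xl := dx l 0 in xl0 KP hc *; set u := col_mx (subv B dx) (- dy) in KP hc *.
have xn : xl != 0 by rewrite gt_eqF.
set K' := KB H M A B - xl^-1 *: (u *m cc^T).
set T : 'M[R]_(1 + (#|B| + m)) := block_mx 0 (xl^-1 *: cc^T) 0 K'.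
have PT : Pm xl u *m T = block_mx 0 cc^T 0 (KB H M A B).
  rewrite /Pm /T mulmx_block !mulmx0 !mul0mx !addr0 ?add0r mul1mx mul_scalar_mx scalerA.
  by rewrite mulfV // scale1r -scalemxAr addrC /K' subrK.
have CP : char_poly (Kl H M A B l) = char_poly T.
  have E : char_poly_mx (Kl H M A B l) *m map_mx polyC (Pm xl u)
           = map_mx polyC (Pm xl u) *m char_poly_mx T.
    rewrite /char_poly_mx mulmxBl mulmxBr -!map_mxM KP -PT; congr (_ - _).
    by rewrite scalar_mxC.
  have := congr1 determinant E; rewrite !det_mulmx det_map_mx detP => h.
  have nz : xl%:P != 0 :> {poly R} by rewrite polyC_eq0.
  by apply: (mulIf nz); rewrite /char_poly h mulrC.
have CT : char_poly T = 'X * char_poly K'.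
  rewrite /char_poly /char_poly_mx /T map_block_mx !map_mx0 (scalar_mx_block 1 (#|B| + m)).
  rewrite opp_block_mx add_block_mx !oppr0 !addr0 det_ublock det_scalar1.
  by [].
have ccE : cc^T = - (xl^-1 *: (u^T *m KB H M A B)).
  have : cc = - (xl^-1 *: (KB H M A B *m u)).
    by rewrite hc scalerN opprK scalerA mulVf // scale1r.
  by move=> ->; rewrite linearN linearZ /= trmx_mul KBsym.
have K'E : K' = (1%:M + (xl^-1 * xl^-1) *: (u *m u^T)) *m KB H M A B.
  rewrite mulmxDl mul1mx -scalemxAl /K' ccE mulmxN -scalemxAr scalerN scalerA opprK mulmxA.
  by [].
have K'u : K' \in unitmx.
  rewrite K'E unitmx_mul KBu andbT; apply: uuT_unit.
  by apply: mulr_gt0; rewrite invr_gt0.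
rewrite CP CT mupMl; last first.
  rewrite /root horner_coef0 char_poly_det mulf_eq0 negb_or signr_eq0 /=.
  by rewrite -unitfE -unitmxE.
have -> : ('X : {poly R}) = ('X - (0 : R)%:P) ^+ 1 by rewrite expr1 polyC0 subr0.
by rewrite mup_XsubCX eqxx.
Qed.


Lemma kvec dx dy dz : sys H M A B N dx dy dz -> 0 < dx l 0 -> dz l 0 = 0 ->
  (let v := col_mx (dx l 0)%:M (col_mx (subv B dx) (0 : 'cV[R]_m)) in
   v != 0 /\ Kl H M A B l *m v = 0).
Proof.
move=> S xl0 zl0.
have [_ y0 _] := sing_case S zl0.
have KP := KlP S; rewrite zl0 scal0 y0 oppr0 in KP.
have vE : col_mx (dx l 0)%:M (col_mx (subv B dx) (0 : 'cV[R]_m))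
    = Pm (dx l 0) (col_mx (subv B dx) 0) *m col_mx 1%:M 0.
  by rewrite /Pm mul_block_col !mulmx1 !mulmx0 !addr0.
move=> v; split.
  apply/eqP => /matrixP /(_ (lshift _ 0) 0); rewrite col_mxEu eS mxE => e.
  by move: xl0; rewrite e ltxx.
by rewrite /v vE mulmxA KP mul_block_col !mulmx0 !mulmx1 !addr0 col_mx0.
Qed.

End P.

Theorem proposition3 (R : realFieldType) (n m : nat)
    (H : 'M[R]_n) (M : 'M[R]_m) (A : 'M[R]_(m, n))
    (l : 'I_n) (B N : {set 'I_n}) :
  sym_psd H -> sym_psd M ->
  l \notin B -> l \notin N -> [disjoint B & N] ->
  B :|: [set l] :|: N = setT ->
  KB H M A B \in unitmx ->
  (* 1. *)
  (forall dx dy dz, sys H M A B N dx dy dz -> dx l 0 = 0 ->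
     [/\ subv B dx = 0, dy = 0, dz l 0 = 0 & subv N dz = 0]) /\
  (* 2. uniqueness *)
  (forall dx dy dz dx' dy' dz',
     sys H M A B N dx dy dz -> sys H M A B N dx' dy' dz' ->
     0 < dx l 0 -> dx' l 0 = dx l 0 ->
     [/\ subv B dx' = subv B dx, dy' = dy, dz' l 0 = dz l 0
       & subv N dz' = subv N dz]) /\
  (* 2. formulas and dichotomy *)
  (forall dx dy dz, sys H M A B N dx dy dz -> 0 < dx l 0 ->
     [/\ KB H M A B *m col_mx (subv B dx) (- dy)
           = - (dx l 0 *: col_mx (subcol B H l) (col l A)),
         dz l 0 = H l l * dx l 0 + ((subcol B H l)^T *m subv B dx) 0 0
                  - ((col l A)^T *m dy) 0 0,
         subv N dz = dx l 0 *: subcol N H l + (subm B N H)^T *m subv B dx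
                     - (colsubm A N)^T *m dy &
         ((Kl H M A B l \in unitmx /\ 0 < dz l 0) \/
          [/\ Kl H M A B l \notin unitmx, dz l 0 = 0,
              dy = 0 /\ subv N dz = 0,
              mup 0 (char_poly (Kl H M A B l)) = 1%N &
              (let v := col_mx (dx l 0)%:M (col_mx (subv B dx) (0 : 'cV[R]_m)) in
               v != 0 /\ Kl H M A B l *m v = 0)])]).
Proof.
move=> HP MP lB lN dBN cov KBu.
have HS := HP.1; have MS := MP.1.
split; [|split].
- move=> dx dy dz S xl0.
  have := uniq_gen lB lN dBN cov KBu (sys0 H M A B N) S.
  rewrite xl0 mxE => /(_ erefl) [ex ey ez].
  rewrite ex ey ez; split=> //. all: try (apply/matrixP => i j). all: rewrite ?mxE //.
- move=> dx dy dz dx' dy' dz' S S' _ e.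
  by have [-> -> ->] := uniq_gen lB lN dBN cov KBu S S' e.
- move=> dx dy dz S xl0; split.
  + exact: (KBeq lB lN dBN cov S).
  + exact: (zl_formula lB lN dBN cov HS S).
  + exact: (zN_formula lB lN dBN cov HS S).
  + have zge : 0 <= dz l 0.
      have := xz lB lN dBN cov MS S.
      have := HP.2 dx; have := MP.2 dy => h1 h2 e.
      by rewrite -(pmulr_rge0 _ xl0) e addr_ge0.
    have dr := det_rel lB lN dBN cov HS S.
    move: zge; rewrite le_eqVlt => /orP [/eqP z0 | zpos].
      right; have [_ y0 z0'] := sing_case lB lN dBN cov MS KBu HP MP S (esym z0).
      split.
      * rewrite unitmxE unitfE negbK; apply/eqP.
        move: dr; rewrite -z0 mul0r => /eqP; rewrite mulf_eq0 (gt_eqF xl0) orbF.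
        by move/eqP.
      * by rewrite -z0.
      * by split; rewrite ?y0 // z0'; apply/matrixP => i j; rewrite !mxE.
      * exact: (mup_case lB lN dBN cov HS MS KBu HP MP S xl0 (esym z0)).
      * exact: (kvec lB lN dBN cov HS MS KBu HP MP S xl0 (esym z0)).
    left; split=> //.
    rewrite unitmxE unitfE; apply/eqP => d0.
    move: dr; rewrite d0 mul0r => /esym /eqP; rewrite mulf_eq0 gt_eqF //=.
    by move: KBu; rewrite unitmxE unitfE => /negPf ->.
Qed.
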